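(* Let $\kappa<\lambda$ be infinite regular cardinals. Then $\mathbb{P}(\lambda,\kappa)$ is $\lambda$-strategically closed.
   Context: For a set $C$ of ordinals, $C'=\{\alpha\in C\mid\sup(C\cap\alpha)=\alpha\}$. $\mathbb{P}(\lambda,\kappa)$ consists of conditions $p=\langle C^p_{\alpha,i}\mid\alpha\le\gamma^p,\ i(\alpha)^p\le i<\kappa\rangle$ such that: (1) $\gamma^p<\lambda$ is a limit ordinal and for all limit $\alpha\le\gamma^p$, $i(\alpha)^p<\kappa$; (2) for limit $\alpha\le\gamma^p$ and $i(\alpha)^p\le i<\kappa$, $C^p_{\alpha,i}$ is club in $\alpha$; (3) for limit $\alpha\le\gamma^p$ and $i(\alpha)^p\le i<j<\kappa$, $C^p_{\alpha,i}\subseteq C^p_{\alpha,j}$; (4) for limit $\alpha<\beta\le\gamma^p$ and $i(\beta)^p\le i<\kappa$, if $\alpha\in(C^p_{\beta,i})'$ then $i(\alpha)^p\le i$ and $C^p_{\beta,i}\cap\alpha=C^p_{\alpha,i}$; (5) for limit $\alpha<\beta\le\gamma^p$ there is $i<\kappa$ with $\alpha\in(C^p_{\beta,i})'$. The order is end-extension: $q\le p$ iff $\gamma^q\ge\gamma^p$ and for all limit $\alpha\le\gamma^p$, $i(\alpha)^q=i(\alpha)^p$ and $C^q_{\alpha,i}=C^p_{\alpha,i}$ for $i(\alpha)^p\le i<\kappa$. For a poset $\mathbb{P}$ and ordinal $\beta$, the game $G_\beta(\mathbb{P})$: players I and II alternately choose a decreasing sequence $\langle p_\alpha\mid\alpha<\beta\rangle$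 in $\mathbb{P}$ with $p_0=\mathbb{1}_{\mathbb{P}}$; I plays at odd stages and II at even stages (including all limit stages); I wins if at some even stage $\alpha<\beta$ II cannot play, otherwise II wins. $\mathbb{P}$ is $\beta$-strategically closed if II has a winning strategy in $G_\beta(\mathbb{P})$. *)

(* Defs.v *)
(* Ordinals below lambda are modelled by the elements of a
   well-ordered type (O, lt); lambda itself is (the order type of) O. *)
From Stdlib Require Import Relations Wellfounded.

Section PLK.
Variable O : Type.
Variable lt : O -> O -> Prop.
Variable kap : O.

Definition le (x y : O) : Prop := lt x y \/ x = y.

Definition is_wellorder : Prop :=
  well_founded lt /\ (forall x y z, lt x y -> lt y z -> lt x z) /\
  (forall x y, lt x y \/ x = y \/ lt y x).

Definition injective {A B : Type} (f : A -> B) : Prop :=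
  forall a b, f a = f b -> a = b.

Definition lambda_infinite_regular_cardinal : Prop :=
  (forall a : O, ~ exists f : O -> {x : O | lt x a}, injective f) /\
  (exists f : nat -> O, injective f) /\
  (forall S : O -> Prop, (forall x, exists y, S y /\ le x y) ->
     exists f : O -> {y : O | S y}, injective f).

Definition kappa_infinite_regular_cardinal : Prop :=
  (forall a, lt a kap -> ~ exists f : {x : O | lt x kap} -> {x : O | lt x a}, injective f) /\
  (exists f : nat -> {x : O | lt x kap}, injective f) /\
  (forall S : O -> Prop, (forall x, lt x kap -> exists y, S y /\ lt y kap /\ le x y) ->
     exists f : {x : O | lt x kap} -> {y : O | S y /\ lt y kap}, injective f).

Definition is_limit (a : O) : Prop :=
  (exists b, lt b a) /\ (forall b, lt b a -> exists c, lt b c /\ lt c a).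

Definition acc_pt (C : O -> Prop) (a : O) : Prop :=
  C a /\ (forall b, lt b a -> exists c, C c /\ lt b c /\ lt c a).

Definition club_in (a : O) (C : O -> Prop) : Prop :=
  (forall x, C x -> lt x a) /\
  (forall b, lt b a -> exists c, C c /\ lt b c) /\
  (forall d, lt d a -> (exists b, lt b d) ->
     (forall b, lt b d -> exists c, C c /\ lt b c /\ lt c d) -> C d).

(* raw data of a condition: gamma^p, alpha |-> i(alpha)^p,
   Cl a i x  <->  x \in C^p_{a,i}  (only relevant for limit a <= gamma,
   i(a) <= i < kappa) *)
Record cond_data : Type := mkCond {
  gam : O;
  iota : O -> O;
  Cl : O -> O -> O -> Prop }.

Definition valid (p : cond_data) : Prop :=
  is_limit (gam p) /\
  (forall a, is_limit a -> le a (gam p) -> lt (iota p a) kap) /\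
  (forall a i, is_limit a -> le a (gam p) -> le (iota p a) i -> lt i kap ->
     club_in a (Cl p a i)) /\
  (forall a i j, is_limit a -> le a (gam p) -> le (iota p a) i -> lt i j -> lt j kap ->
     forall x, Cl p a i x -> Cl p a j x) /\
  (forall a b i, is_limit a -> is_limit b -> lt a b -> le b (gam p) ->
     le (iota p b) i -> lt i kap -> acc_pt (Cl p b i) a ->
     le (iota p a) i /\ (forall x, (Cl p b i x /\ lt x a) <-> Cl p a i x)) /\
  (forall a b, is_limit a -> is_limit b -> lt a b -> le b (gam p) ->
     exists i, le (iota p b) i /\ lt i kap /\ acc_pt (Cl p b i) a).

(* the forcing P(lambda,kappa), with an adjoined top element 1 = None *)
Definition Pcond : Type := option {p : cond_data | valid p}.

Definition ext (q p : cond_data) : Prop :=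
  le (gam p) (gam q) /\
  forall a, is_limit a -> le a (gam p) ->
    iota q a = iota p a /\
    (forall i, le (iota p a) i -> lt i kap -> forall x, Cl q a i x <-> Cl p a i x).

Definition Ple (q p : Pcond) : Prop :=
  match q, p with
  | _, None => True
  | None, Some _ => False
  | Some q', Some p' => ext (proj1_sig q') (proj1_sig p')
  end.

(* parity of ordinals: a = d + n with d zero or limit, n even *)
Definition succ_of (b a : O) : Prop := lt b a /\ forall c, lt c a -> le c b.

Inductive is_even : O -> Prop :=
  | ev_lim : forall a, (forall b, lt b a -> exists c, lt b c /\ lt c a) -> is_even a
  | ev_ss : forall a b c, is_even a -> succ_of a b -> succ_of b c -> is_even c.

(* strategies for player II in G_lambda: a move at stage a is a function
   of the play strictly below a *)
Definition strategy : Type := forall a : O, ({x : O | lt x a} -> Pcond) -> Pcond.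

Definition restr (p : O -> Pcond) (a : O) : {x : O | lt x a} -> Pcond :=
  fun x => p (proj1_sig x).

Definition play_upto (s : strategy) (a : O) (p : O -> Pcond) : Prop :=
  (forall x y, lt x y -> lt y a -> Ple (p y) (p x)) /\
  (forall x, lt x a -> is_even x -> p x = s x (restr p x)).

Definition winning (s : strategy) : Prop :=
  forall a, is_even a -> forall p, play_upto s a p ->
    (forall x, lt x a -> Ple (s a (restr p a)) (p x)) /\
    ((forall x, ~ lt x a) -> s a (restr p a) = None).

Definition strategically_closed : Prop := exists s : strategy, winning s.

End PLK.

(* Main.v *)
Require Import Defs.
From Stdlib Require Import Classical ClassicalEpsilon ProofIrrelevance.

Section Main.
Context (O : Type) (lt : O -> O -> Prop) (kap : O).
Context (WO : is_wellorder O lt).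

Local Notation LE := (Defs.le O lt).
Local Notation ISLIM := (is_limit O lt).
Local Notation ACC := (acc_pt O lt).
Local Notation CLUB := (club_in O lt).
Local Notation CD := (cond_data O).
Local Notation gm := (gam O).
Local Notation io := (iota O).
Local Notation cl := (Cl O).
Local Notation VALID := (valid O lt kap).
Local Notation EXT := (ext O lt kap).

Lemma lt_trans x y z : lt x y -> lt y z -> lt x z.
Proof. destruct WO as [_ [H _]]; eauto. Qed.

Lemma lt_total x y : lt x y \/ x = y \/ lt y x.
Proof. destruct WO as [_ [_ H]]; eauto. Qed.

Lemma lt_irrefl x : ~ lt x x.
Proof.
  destruct WO as [W _]. induction (W x) as [x _ IH]. intro h. exact (IH x h h).
Qed.

Lemma lt_asym x y : lt x y -> ~ lt y x.
Proof. intros h1 h2. exact (lt_irrefl x (lt_trans _ _ _ h1 h2)). Qed.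

Lemma not_lt_le x y : ~ lt x y -> LE y x.
Proof. intro h. destruct (lt_total x y) as [a|[a|a]]; [tauto| right; auto | left; auto]. Qed.

Lemma le_not_lt x y : LE x y -> ~ lt y x.
Proof. intros [h|h] h2; [exact (lt_asym _ _ h h2)| subst; exact (lt_irrefl _ h2)]. Qed.

Lemma lt_not_le x y : lt x y -> ~ LE y x.
Proof. intros h h2. exact (le_not_lt _ _ h2 h). Qed.

Lemma le_refl x : LE x x.
Proof. right; reflexivity. Qed.

Lemma le_trans x y z : LE x y -> LE y z -> LE x z.
Proof.
  intros [h|h] [h'|h']; subst; try (left; eauto using lt_trans; fail); auto; right; auto.
Qed.

Lemma le_lt_trans x y z : LE x y -> lt y z -> lt x z.
Proof. intros [h|h] h'; subst; eauto using lt_trans. Qed.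

Lemma lt_le_trans x y z : lt x y -> LE y z -> lt x z.
Proof. intros h [h'|h']; subst; eauto using lt_trans. Qed.

Lemma le_antisym x y : LE x y -> LE y x -> x = y.
Proof. intros [h|h] h'; auto. exfalso; exact (le_not_lt _ _ h' h). Qed.

Lemma lt_le x y : lt x y -> LE x y.
Proof. left; auto. Qed.

Lemma le_total x y : LE x y \/ LE y x.
Proof. destruct (lt_total x y) as [a|[a|a]]; [left;left|left;right|right;left]; auto. Qed.

Lemma wf_least (P : O -> Prop) : (exists x, P x) -> exists x, P x /\ forall y, P y -> ~ lt y x.
Proof.
  destruct WO as [W _]. intros [x Hx]. revert Hx. induction (W x) as [x _ IH]. intro Hx.
  destruct (classic (exists y, P y /\ lt y x)) as [[y [Py ly]]|N].
  - exact (IH y ly Py).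
  - exists x; split; auto. intros y Py ly. apply N; eauto.
Qed.


Lemma acc_mono (C D : O -> Prop) a : (forall x, C x -> D x) -> ACC C a -> ACC D a.
Proof.
  intros H [h1 h2]; split; auto. intros b hb. destruct (h2 b hb) as [c [? ?]]. exists c; split; auto.
Qed.

Lemma acc_restr (C D : O -> Prop) a bnd : lt a bnd -> (forall x, lt x bnd -> (C x <-> D x)) -> ACC C a -> ACC D a.
Proof.
  intros ha H [h1 h2]; split. apply H; auto.
  intros b hb. destruct (h2 b hb) as [c [hc [? hc2]]]. exists c; split; auto.
  apply H; eauto using lt_trans.
Qed.

Lemma club_ext a (C D : O -> Prop) : (forall x, C x <-> D x) -> CLUB a C -> CLUB a D.
Proof.
  intros H [h1 [h2 h3]]. split; [|split].
  - intros x hx; apply h1, H; auto.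
  - intros b hb; destruct (h2 b hb) as [c [? ?]]; exists c; split; auto; apply H; auto.
  - intros d hd hb hc. apply H. apply h3; auto. intros b lb. destruct (hc b lb) as [c [? ?]].
    exists c; split; auto; apply H; auto.
Qed.

Lemma club_closed a C d : CLUB a C -> lt d a -> (exists b, lt b d) ->
  (forall b, lt b d -> exists c, C c /\ lt b c /\ lt c d) -> C d.
Proof. intros [_ [_ h]]; eauto. Qed.

Lemma no_acc_pred (C : O -> Prop) x w : lt w x -> (forall c, lt w c -> ~ lt c x) -> ~ ACC C x.
Proof. intros h1 h2 [_ h]. destruct (h w h1) as [c [_ [? ?]]]. exact (h2 c H H0). Qed.

Lemma no_lim_pred x w : lt w x -> (forall c, lt w c -> ~ lt c x) -> ~ ISLIM x.
Proof. intros h1 h2 [_ h]. destruct (h w h1) as [c [? ?]]. exact (h2 c H H0). Qed.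

Lemma acc_lim C x : ACC C x -> (exists b, lt b x) -> ISLIM x.
Proof. intros [_ h] hb; split; auto. intros b lb; destruct (h b lb) as [c [_ ?]]; eauto. Qed.

Lemma ext_refl p : EXT p p.
Proof. split. apply le_refl. intros; split; auto; tauto. Qed.

Lemma ext_trans r q p : EXT r q -> EXT q p -> EXT r p.
Proof.
  intros [g1 h1] [g2 h2]. split. eapply le_trans; eauto.
  intros a la lea. destruct (h2 a la lea) as [e2 c2].
  destruct (h1 a la (le_trans _ _ _ lea g2)) as [e1 c1]. split. congruence.
  intros i hi hk x. rewrite c1; [apply c2|rewrite e2|]; auto.
Qed.

Lemma proj_eq_sig (A : Type) (S : A -> Prop) (u v : {x | S x}) : proj1_sig u = proj1_sig v -> u = v.
Proof.
  destruct u as [u hu], v as [v hv]; simpl; intro e; subst. f_equal; apply proof_irrelevance.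
Qed.

Context (LR : lambda_infinite_regular_cardinal O lt) (KR : kappa_infinite_regular_cardinal O lt kap).

Lemma no_max x : exists z, lt x z.
Proof.
  apply NNPP; intro N.
  destruct LR as [_ [[g gi] L3]].
  destruct (L3 (fun y => y = x)) as [f fi].
  { intro w. exists x; split; auto. apply not_lt_le. intro h; apply N; eauto. }
  assert (g 0 = g 1) as E.
  { apply fi. apply proj_eq_sig. destruct (f (g 0)), (f (g 1)); simpl; congruence. }
  apply gi in E. discriminate.
Qed.

Lemma bounded_set (S : O -> Prop) (c : O) (h : {y | S y} -> {x | lt x c}) :
  injective h -> exists u, forall y, S y -> lt y u.
Proof.
  intro hi. apply NNPP; intro N.
  destruct LR as [L1 [_ L3]].
  destruct (L3 S) as [f fi].
  { intro x. apply NNPP; intro M. apply N. exists x. intros y Sy. apply NNPP; intro K.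
    apply M; exists y; split; auto. apply not_lt_le; auto. }
  apply (L1 c). exists (fun x => h (f x)). intros u v e. apply fi, hi, e.
Qed.

Lemma bounded_gen (A : Type) (c : O) (k : A -> {x | lt x c}) (S : O -> Prop) (G : A -> O -> Prop) :
  injective k -> (forall u, S u -> exists y, G y u) -> (forall y u v, G y u -> G y v -> u = v) ->
  exists u0, forall u, S u -> lt u u0.
Proof.
  intros ki H1 H2.
  set (ix := fun u : {y | S y} => proj1_sig (constructive_indefinite_description _ (H1 _ (proj2_sig u)))).
  apply (bounded_set S c (fun u => k (ix u))).
  intros u v e. apply ki in e. apply proj_eq_sig.
  unfold ix in e. destruct (constructive_indefinite_description _ (H1 _ (proj2_sig u))) as [yu gu].
  destruct (constructive_indefinite_description _ (H1 _ (proj2_sig v))) as [yv gv]. simpl in e.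
  subst. eauto.
Qed.

Definition nxt (x : O) : O := epsilon (inhabits x) (fun z => lt x z /\ forall w, lt x w -> ~ lt w z).

Lemma nxt_spec x : lt x (nxt x) /\ forall w, lt x w -> ~ lt w (nxt x).
Proof.
  unfold nxt. apply epsilon_spec. apply wf_least. apply no_max.
Qed.

Definition sq (g : O) (n : nat) : O := Nat.iter n nxt g.

Lemma sq_S g n : sq g (S n) = nxt (sq g n).
Proof. reflexivity. Qed.

Lemma sq_lt g n m : (n < m)%nat -> lt (sq g n) (sq g m).
Proof.
  induction 1. rewrite sq_S; apply nxt_spec.
  rewrite sq_S; eapply lt_trans; [eassumption| apply nxt_spec].
Qed.

Lemma sq_ge g n : LE g (sq g n).
Proof. destruct n. apply le_refl. left. apply (sq_lt g 0). auto with arith. Qed.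

Definition isbp g u := (forall n, lt (sq g n) u) /\ forall v, (forall n, lt (sq g n) v) -> ~ lt v u.

Lemma bp_exists g : exists u, isbp g u.
Proof.
  destruct KR as [_ [[k ki] _]].
  destruct (bounded_gen nat kap k (fun y => exists n, y = sq g n) (fun n y => y = sq g n)) as [u0 hu0]; auto.
  { intros y u v -> ->; auto. }
  apply wf_least. exists u0. intro n. apply hu0; eauto.
Qed.

Definition bp (g : O) : O := epsilon (inhabits g) (isbp g).

Lemma bp_spec g : isbp g (bp g).
Proof. unfold bp. apply epsilon_spec, bp_exists. Qed.

Lemma bp_below g b : lt b (bp g) -> exists n, LE b (sq g n).
Proof.
  intro hb. apply NNPP; intro N. destruct (bp_spec g) as [_ h]. apply (h b); auto.
  intro n. apply NNPP; intro M. apply N; exists n. apply not_lt_le; auto.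
Qed.

Lemma bp_gt g : lt g (bp g).
Proof. apply (proj1 (bp_spec g) 0). Qed.

Lemma bp_lim g : ISLIM (bp g).
Proof.
  split. exists g; apply bp_gt.
  intros b hb. destruct (bp_below g b hb) as [n hn]. exists (sq g (S n)). split.
  eapply le_lt_trans; [eassumption| apply sq_lt; auto].
  apply (proj1 (bp_spec g)).
Qed.

Lemma in_sq g n x : LE g x -> lt x (sq g n) -> exists m, x = sq g m.
Proof.
  induction n; intros h1 h2. simpl in h2. exfalso; exact (le_not_lt _ _ h1 h2).
  destruct (classic (lt x (sq g n))) as [l|l]; auto.
  apply not_lt_le in l. destruct l as [l|l]; [|exists n; auto].
  rewrite sq_S in h2. exfalso. exact (proj2 (nxt_spec (sq g n)) x l h2).
Qed.

Lemma bp_pred g x : lt g x -> lt x (bp g) -> exists w, lt w x /\ forall c, lt w c -> ~ lt c x.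
Proof.
  intros h1 h2. destruct (bp_below g x h2) as [n hn].
  assert (exists m, x = sq g m) as [m ->].
  { destruct hn as [hn|hn]. eapply in_sq; eauto; left; auto. eauto. }
  destruct m. simpl in h1. exfalso; exact (lt_irrefl _ h1).
  exists (sq g m). rewrite sq_S. split. apply nxt_spec. apply nxt_spec.
Qed.

Lemma bp_noacc g C x : lt g x -> lt x (bp g) -> ~ ACC C x.
Proof. intros h1 h2. destruct (bp_pred g x h1 h2) as [w [? ?]]. eapply no_acc_pred; eauto. Qed.

Lemma bp_nolim g x : lt g x -> lt x (bp g) -> ~ ISLIM x.
Proof. intros h1 h2. destruct (bp_pred g x h1 h2) as [w [? ?]]. eapply no_lim_pred; eauto. Qed.


Lemma le_cases x y : LE x y -> lt x y \/ x = y.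
Proof. auto. Qed.

Lemma lt_neq x y : lt x y -> x <> y.
Proof. intros h e; subst; exact (lt_irrefl _ h). Qed.

Section Succ.
Context (P : CD) (be io0 j0 : O).
Context (HP : VALID P) (Hb1 : ISLIM be) (Hb2 : LE be (gm P)) (Hi1 : LE (io P be) io0) (Hi2 : lt io0 kap)
  (Hj1 : LE io0 j0) (Hj2 : lt j0 kap) (Hj3 : LE (io P (gm P)) j0)
  (Hj4 : lt be (gm P) -> ACC (cl P (gm P) j0) be).

Let g := gm P.
Let b := bp g.
Let T x := LE g x /\ lt x b.

Definition Ctop (i x : O) : Prop :=
  (LE j0 i /\ (cl P (gm P) i x \/ (LE (gm P) x /\ lt x (bp (gm P))))) \/
  (~ LE j0 i /\ (cl P be i x \/ x = be \/ (LE (gm P) x /\ lt x (bp (gm P))))).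

Definition sdata : CD :=
  mkCond O (bp (gm P))
    (fun a => if excluded_middle_informative (a = bp (gm P)) then io0 else io P a)
    (fun a i x => (a = bp (gm P) /\ Ctop i x) \/ (a <> bp (gm P) /\ cl P a i x)).

Lemma sd_gam : gm sdata = b.
Proof. reflexivity. Qed.

Lemma sd_top_io : io sdata b = io0.
Proof. simpl. destruct (excluded_middle_informative (b = bp (gm P))); auto. exfalso; auto. Qed.

Lemma sd_top_cl i x : cl sdata b i x <-> Ctop i x.
Proof. simpl. split. intros [[_ h]|[h _]]; auto. exfalso; auto. intro h; left; split; auto. Qed.

Lemma sd_oth a : a <> b -> io sdata a = io P a /\ forall i x, cl sdata a i x <-> cl P a i x.
Proof.
  intro n. simpl. split.
  destruct (excluded_middle_informative (a = bp (gm P))); auto. exfalso; auto.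
  intros i x. split. intros [[h _]|[_ h]]; auto. exfalso; auto. intro h; right; auto.
Qed.

Lemma gb : lt g b.
Proof. apply bp_gt. Qed.

Lemma split_lim a : ISLIM a -> LE a b -> LE a g \/ a = b.
Proof.
  intros la [h|h]; auto. destruct (classic (lt g a)) as [n|n].
  exfalso. exact (bp_nolim g a n h la). left; apply not_lt_le; auto.
Qed.

Let V1 := proj1 HP.
Let V2 := proj1 (proj2 HP).
Let V3 := proj1 (proj2 (proj2 HP)).
Let V4 := proj1 (proj2 (proj2 (proj2 HP))).
Let V5 := proj1 (proj2 (proj2 (proj2 (proj2 HP)))).
Let V6 := proj2 (proj2 (proj2 (proj2 (proj2 HP)))).

Lemma clP_lt a i x : ISLIM a -> LE a g -> LE (io P a) i -> lt i kap -> cl P a i x -> lt x a.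
Proof. intros. eapply (proj1 (V3 a i H H0 H1 H2)); eauto. Qed.

Lemma clP_mono a i j x : ISLIM a -> LE a g -> LE (io P a) i -> LE i j -> lt j kap -> cl P a i x -> cl P a j x.
Proof. intros h1 h2 h3 [h|h] h5 h6; subst; auto. eapply V4; eauto. Qed.

Lemma ge_io i : LE io0 i -> LE (io P be) i.
Proof. intro; eapply le_trans; eauto. Qed.

Lemma ge_iog i : LE j0 i -> LE (io P g) i.
Proof. intro; eapply le_trans; eauto. Qed.

Lemma bek : lt be b.
Proof. eapply le_lt_trans; [exact Hb2| exact gb]. Qed.

Lemma glue i : LE j0 i -> lt i kap -> lt be g -> cl P g i be /\ forall x, cl P be i x -> cl P g i x.
Proof.
  intros h1 h2 h3. assert (A : ACC (cl P g i) be).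
  { eapply acc_mono; [|exact (Hj4 h3)]. intros x; eapply clP_mono; eauto. apply le_refl. }
  split. apply A. intros x hx.
  destruct (V5 be g i Hb1 V1 h3 (le_refl _) (ge_iog i h1) h2 A) as [_ E]. apply E; auto.
Qed.

Lemma ctop_lt i x : LE io0 i -> lt i kap -> Ctop i x -> lt x b.
Proof.
  intros h1 h2 [[J [h|[_ h]]]|[_ [h|[h|[_ h]]]]]; auto.
  - eapply lt_trans; [|exact gb]. exact (clP_lt g i x V1 (le_refl _) (ge_iog i J) h2 h).
  - eapply lt_trans; [|exact bek]. exact (clP_lt be i x Hb1 Hb2 (ge_io i h1) h2 h).
  - subst; exact bek.
Qed.

Lemma ctop_club i : LE io0 i -> lt i kap -> CLUB b (Ctop i).
Proof.
  intros h1 h2. split; [|split].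
  - intros x; apply ctop_lt; auto.
  - intros c hc. destruct (bp_below g c hc) as [n hn]. exists (sq g (S n)).
    assert (T (sq g (S n))). { split. apply sq_ge. apply (proj1 (bp_spec g)). }
    split. destruct (classic (LE j0 i)); [left|right]; split; auto.
    eapply le_lt_trans; eauto. apply sq_lt; auto.
  - intros d hd hex hc.
    destruct (classic (LE j0 i)) as [J|J].
    + left; split; auto. destruct (classic (lt d g)) as [l|l].
      * left. apply (club_closed g _ d (V3 g i V1 (le_refl _) (ge_iog i J) h2) l hex).
        intros e le_. destruct (hc e le_) as [c [C [? ?]]]. exists c; split; auto.
        destruct C as [[_ [C|[C _]]]|[C _]]; auto; try tauto.
        exfalso. exact (le_not_lt _ _ C (lt_trans _ _ _ H0 l)).
      * right. split; auto. apply not_lt_le; auto.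
    + right; split; auto.
      destruct (lt_total d be) as [l|[l|l]].
      * left. apply (club_closed be _ d (V3 be i Hb1 Hb2 (ge_io i h1) h2) l hex).
        intros e le_. destruct (hc e le_) as [c [C [? ?]]]. exists c; split; auto.
        destruct C as [[C _]|[_ [C|[C|[C _]]]]]; auto; try tauto.
        subst. exfalso. exact (lt_asym _ _ H0 l).
        exfalso. exact (le_not_lt _ _ (le_trans _ _ _ Hb2 C) (lt_trans _ _ _ H0 l)).
      * auto.
      * destruct (classic (lt d g)) as [l2|l2].
        -- exfalso. destruct (hc be l) as [c [C [? ?]]].
           destruct C as [[C _]|[_ [C|[C|[C _]]]]]; auto.
           ++ exact (lt_asym _ _ H (clP_lt be i c Hb1 Hb2 (ge_io i h1) h2 C)).
           ++ subst; exact (lt_irrefl _ H).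
           ++ exact (le_not_lt _ _ C (lt_trans _ _ _ H0 l2)).
        -- right; right. split; auto. apply not_lt_le; auto.
Qed.

Lemma ctop_acc a i : ISLIM a -> lt a b -> LE io0 i -> lt i kap -> ACC (Ctop i) a ->
  LE (io P a) i /\ forall x, (Ctop i x /\ lt x a) <-> cl P a i x.
Proof.
  intros la ab h1 h2 A.
  destruct (classic (lt g a)) as [ga|ga].
  { exfalso. exact (bp_noacc g _ a ga ab A). }
  apply not_lt_le in ga.
  destruct (classic (LE j0 i)) as [J|J].
  - destruct ga as [ga|ga].
    + assert (A' : ACC (cl P g i) a).
      { eapply acc_restr; [exact ga| |exact A]. intros x lx. split.
        - intros [[_ [C|[C _]]]|[C _]]; auto; try tauto. exfalso; exact (le_not_lt _ _ C lx).
        - intro C; left; split; auto. }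
      destruct (V5 a g i la V1 ga (le_refl _) (ge_iog i J) h2 A') as [E1 E2]. split; auto.
      intro x. rewrite <- E2. split.
      * intros [[[_ [C|[C _]]]|[C _]] lx]; auto; try tauto.
        exfalso; exact (le_not_lt _ _ C (lt_trans _ _ _ lx ga)).
      * intros [C lx]; split; auto. left; split; auto.
    + subst a. split. apply ge_iog; auto. intro x. split.
      * intros [[[_ [C|[C _]]]|[C _]] lx]; auto; try tauto.
        exfalso; exact (le_not_lt _ _ C lx).
      * intros C; split. left; split; auto. exact (clP_lt g i x V1 (le_refl _) (ge_iog i J) h2 C).
  - destruct (lt_total a be) as [l|[l|l]].
    + assert (A' : ACC (cl P be i) a).
      { eapply acc_restr; [exact l| |exact A]. intros x lx. split.
        - intros [[C _]|[_ [C|[C|[C _]]]]]; auto; try tauto. subst; exfalso; exact (lt_irrefl _ lx).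
          exfalso; exact (le_not_lt _ _ (le_trans _ _ _ Hb2 C) lx).
        - intro C; right; split; auto. }
      destruct (V5 a be i la Hb1 l Hb2 (ge_io i h1) h2 A') as [E1 E2]. split; auto.
      intro x. rewrite <- E2. split.
      * intros [[[C _]|[_ [C|[C|[C _]]]]] lx]; auto; try tauto.
        subst; exfalso; exact (lt_asym _ _ lx l).
        exfalso; exact (le_not_lt _ _ (le_trans _ _ _ Hb2 C) (lt_trans _ _ _ lx l)).
      * intros [C lx]; split; auto. right; split; auto.
    + subst a. split. apply ge_io; auto. intro x. split.
      * intros [[[C _]|[_ [C|[C|[C _]]]]] lx]; auto; try tauto.
        subst; exfalso; exact (lt_irrefl _ lx).
        exfalso; exact (le_not_lt _ _ (le_trans _ _ _ Hb2 C) lx).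
      * intros C; split. right; split; auto. exact (clP_lt be i x Hb1 Hb2 (ge_io i h1) h2 C).
    + exfalso. destruct A as [_ A]. destruct (A be l) as [c [C [? ?]]].
      destruct C as [[C _]|[_ [C|[C|[C _]]]]]; auto.
      * exact (lt_asym _ _ H (clP_lt be i c Hb1 Hb2 (ge_io i h1) h2 C)).
      * subst; exact (lt_irrefl _ H).
      * exact (le_not_lt _ _ C (lt_le_trans _ _ _ H0 ga)).
Qed.


Lemma ctop_mono i j x : LE io0 i -> lt i j -> lt j kap -> Ctop i x -> Ctop j x.
Proof.
  intros h1 ij h2 C. assert (hi : lt i kap) by (eapply lt_trans; eauto).
  assert (h1j : LE io0 j) by (eapply le_trans; [exact h1| left; exact ij]).
  destruct C as [[J C]|[J C]].
  - assert (J' : LE j0 j) by (eapply le_trans; [exact J| left; exact ij]).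
    left; split; auto. destruct C as [C|C]; auto. left.
    eapply clP_mono; [exact V1|apply le_refl|apply ge_iog; exact J|left; exact ij|exact h2|exact C].
  - destruct (classic (LE j0 j)) as [J'|J'].
    + left; split; auto. destruct C as [C|[C|C]]; auto.
      * destruct (le_cases _ _ Hb2) as [lg|eg].
        -- left. apply (proj2 (glue j J' h2 lg)). exact (clP_mono be i j x Hb1 Hb2 (ge_io i h1) (lt_le _ _ ij) h2 C).
        -- left. rewrite <- eg. exact (clP_mono be i j x Hb1 Hb2 (ge_io i h1) (lt_le _ _ ij) h2 C).
      * subst x. destruct (le_cases _ _ Hb2) as [lg|eg].
        -- left. apply (proj1 (glue j J' h2 lg)).
        -- right. rewrite eg. split. apply le_refl. exact gb.
    + right; split; auto. destruct C as [C|C]; auto. left. exact (clP_mono be i j x Hb1 Hb2 (ge_io i h1) (lt_le _ _ ij) h2 C).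
Qed.

Lemma ctop_v6 a : ISLIM a -> lt a b -> exists i, LE io0 i /\ lt i kap /\ ACC (Ctop i) a.
Proof.
  intros la ab. destruct (split_lim a la (lt_le _ _ ab)) as [[ag|ag]|ab'].
  - destruct (V6 a g la V1 ag (le_refl _)) as [i0 [e1 [e2 A]]].
    destruct (le_total i0 j0) as [l|l].
    + exists j0. split; auto. split; auto. eapply acc_mono; [|exact A].
      intros x C. left; split. apply le_refl. left. exact (clP_mono g i0 j0 x V1 (le_refl _) e1 l Hj2 C).
    + exists i0. split. eapply le_trans; eauto. split; auto. eapply acc_mono; [|exact A].
      intros x C. left; split; auto.
  - subst a. exists j0. split; auto. split; auto. split.
    + left. split. apply le_refl. right. split. apply le_refl. exact gb.
    + intros e le_. destruct (V3 g j0 V1 (le_refl _) Hj3 Hj2) as [c1 [c2 _]].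
      destruct (c2 e le_) as [c [C ec]]. exists c. split; [|split; [exact ec|exact (c1 c C)]].
      left; split. apply le_refl. left; auto.
  - subst a. exfalso; exact (lt_irrefl _ ab).
Qed.

Lemma ctop_accb i : LE io0 i -> lt i kap -> ACC (Ctop i) be.
Proof.
  intros h1 h2. split.
  - destruct (classic (LE j0 i)) as [J|J].
    + left; split; auto. destruct (le_cases _ _ Hb2) as [lg|eg].
      * left. apply (proj1 (glue i J h2 lg)).
      * right. rewrite eg. split. apply le_refl. exact gb.
    + right; split; auto.
  - intros e le_. destruct (V3 be i Hb1 Hb2 (ge_io i h1) h2) as [c1 [c2 _]].
    destruct (c2 e le_) as [c [C ec]]. exists c. split; [|split; auto].
    destruct (classic (LE j0 i)) as [J|J].
    + left; split; auto. left. destruct (le_cases _ _ Hb2) as [lg|eg].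
      * apply (proj2 (glue i J h2 lg)); auto.
      * rewrite <- eg; auto.
    + right; split; auto.
Qed.

Lemma succ_valid : VALID sdata /\ EXT sdata P /\ lt (gm P) (gm sdata) /\ io sdata (gm sdata) = io0 /\
  forall i, LE io0 i -> lt i kap -> ACC (cl sdata (gm sdata) i) be.
Proof.
  assert (EX : EXT sdata P).
  { split. left; exact gb. intros a la ag. assert (a <> b).
    { intro e; subst. exact (le_not_lt _ _ ag gb). }
    destruct (sd_oth a H) as [e1 e2]. split; [exact e1| intros; apply e2]. }
  split; [|split; [exact EX|split; [exact gb|split; [exact sd_top_io|]]]].
  2:{ intros i h1 h2. eapply acc_mono; [|exact (ctop_accb i h1 h2)]. intro x; apply sd_top_cl. }
  assert (NB : forall a, LE a g -> a <> b).
  { intros a ag e; subst. exact (le_not_lt _ _ ag gb). }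
  split; [|split; [|split; [|split; [|split]]]].
  - apply bp_lim.
  - intros a la lab. destruct (split_lim a la lab) as [ag|ag].
    + rewrite (proj1 (sd_oth a (NB a ag))). auto.
    + subst. change (lt (io sdata b) kap). rewrite sd_top_io; auto.
  - intros a i la lab hi hk. destruct (split_lim a la lab) as [ag|ag].
    + destruct (sd_oth a (NB a ag)) as [e1 e2]. rewrite e1 in hi.
      eapply club_ext; [|exact (V3 a i la ag hi hk)]. intro x; rewrite e2; tauto.
    + subst. change (LE (io sdata b) i) in hi. rewrite sd_top_io in hi.
      eapply club_ext; [|exact (ctop_club i hi hk)]. intro x; rewrite sd_top_cl; tauto.
  - intros a i j la lab hi ij hk x. destruct (split_lim a la lab) as [ag|ag].
    + destruct (sd_oth a (NB a ag)) as [e1 e2]. rewrite e1 in hi. rewrite !e2. eapply V4; eauto.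
    + subst. change (LE (io sdata b) i) in hi. rewrite sd_top_io in hi. rewrite !sd_top_cl.
      apply ctop_mono; auto.
  - intros a c i la lc ac lcb hi hk A. destruct (split_lim c lc lcb) as [cg|cg].
    + assert (ag : LE a g) by (left; eapply lt_le_trans; eauto).
      destruct (sd_oth a (NB a ag)) as [e1 e2]. destruct (sd_oth c (NB c cg)) as [f1 f2].
      rewrite f1 in hi. rewrite e1.
      assert (A' : ACC (cl P c i) a). { eapply acc_mono; [|exact A]. intro; apply f2. }
      destruct (V5 a c i la lc ac cg hi hk A') as [E1 E2]. split; auto.
      intro x. rewrite f2, e2. auto.
    + subst c. change (LE (io sdata b) i) in hi. rewrite sd_top_io in hi.
      assert (A' : ACC (Ctop i) a). { eapply acc_mono; [|exact A]. intro; apply sd_top_cl. }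
      destruct (ctop_acc a i la ac hi hk A') as [E1 E2].
      assert (a <> b) by (apply lt_neq; auto).
      destruct (sd_oth a H) as [e1 e2]. rewrite e1. split; auto.
      intro x. rewrite sd_top_cl, e2. auto.
  - intros a c la lc ac lcb. destruct (split_lim c lc lcb) as [cg|cg].
    + destruct (sd_oth c (NB c cg)) as [f1 f2].
      destruct (V6 a c la lc ac cg) as [i [E1 [E2 A]]]. exists i. rewrite f1. split; auto. split; auto.
      eapply acc_mono; [|exact A]. intro; apply f2.
    + subst c. destruct (ctop_v6 a la ac) as [i [E1 [E2 A]]]. exists i.
      change (LE (io sdata b) i /\ lt i kap /\ ACC (cl sdata b i) a). rewrite sd_top_io.
      split; auto. split; auto. eapply acc_mono; [|exact A]. intro; apply sd_top_cl.
Qed.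

End Succ.

Lemma VALID_parts p : VALID p ->
  ISLIM (gm p) /\
  (forall a, ISLIM a -> LE a (gm p) -> lt (io p a) kap) /\
  (forall a i, ISLIM a -> LE a (gm p) -> LE (io p a) i -> lt i kap -> CLUB a (cl p a i)) /\
  (forall a i j, ISLIM a -> LE a (gm p) -> LE (io p a) i -> lt i j -> lt j kap ->
     forall x, cl p a i x -> cl p a j x) /\
  (forall a b i, ISLIM a -> ISLIM b -> lt a b -> LE b (gm p) ->
     LE (io p b) i -> lt i kap -> ACC (cl p b i) a ->
     LE (io p a) i /\ (forall x, (cl p b i x /\ lt x a) <-> cl p a i x)) /\
  (forall a b, ISLIM a -> ISLIM b -> lt a b -> LE b (gm p) ->
     exists i, LE (io p b) i /\ lt i kap /\ ACC (cl p b i) a).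
Proof. auto. Qed.

Section Lim.
Context (E : CD -> Prop) (io0 ga : O).
Context (HE : forall P, E P -> VALID P) (HI : forall P, E P -> io P (gm P) = io0) (Hk : lt io0 kap).
Definition RR (P P' : CD) := lt (gm P) (gm P') /\ EXT P' P /\
  forall i, LE io0 i -> lt i kap -> ACC (cl P' (gm P') i) (gm P).
Context (HT : forall P P', E P -> E P' -> P = P' \/ RR P P' \/ RR P' P).
Context (Hne : exists P, E P) (Hg1 : forall P, E P -> lt (gm P) ga)
  (Hg2 : forall c, lt c ga -> exists P, E P /\ lt c (gm P)).

Definition Ctl (i x : O) : Prop := exists P, E P /\ (cl P (gm P) i x \/ x = gm P).

Definition ldata : CD :=
  mkCond O ga
   (fun a => if excluded_middle_informative (a = ga) then io0 else
       epsilon (inhabits a) (fun j => exists P, E P /\ LE a (gm P) /\ io P a = j))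
   (fun a i x => (a = ga /\ Ctl i x) \/ (a <> ga /\ exists P, E P /\ LE a (gm P) /\ cl P a i x)).

Lemma agree P P' a : E P -> E P' -> ISLIM a -> LE a (gm P) -> LE a (gm P') ->
  io P a = io P' a /\ forall i, LE (io P a) i -> lt i kap -> forall x, cl P a i x <-> cl P' a i x.
Proof.
  intros e e' la l l'. destruct (HT P P' e e') as [->|[[_ [[_ X] _]]|[_ [[_ X] _]]]].
  - split; auto. tauto.
  - destruct (X a la l) as [X1 X2]. split; auto. intros i h1 h2 x. rewrite X2; auto. tauto.
  - destruct (X a la l') as [X1 X2]. split; auto. intros i h1 h2 x. rewrite X2; try tauto; try rewrite <- X1; auto.
Qed.

Lemma l_io a P : a <> ga -> ISLIM a -> E P -> LE a (gm P) -> io ldata a = io P a.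
Proof.
  intros n la e l. simpl. destruct (excluded_middle_informative (a = ga)) as [h|_]. tauto.
  assert (S : exists j, exists P, E P /\ LE a (gm P) /\ io P a = j) by eauto.
  destruct (epsilon_spec (inhabits a) _ S) as [P' [e' [l' E']]]. rewrite <- E'.
  apply (agree P' P a e' e la l' l).
Qed.

Lemma l_cl a P i x : a <> ga -> ISLIM a -> E P -> LE a (gm P) -> LE (io P a) i -> lt i kap ->
  (cl ldata a i x <-> cl P a i x).
Proof.
  intros n la e l hi hk. simpl. split.
  - intros [[h _]|[_ [P' [e' [l' C]]]]]. tauto.
    destruct (agree P' P a e' e la l' l) as [A1 A2]. apply A2; auto. rewrite A1; auto.
  - intro C. right. split; eauto.
Qed.

Lemma l_top_io : io ldata ga = io0.
Proof. simpl. destruct (excluded_middle_informative (ga = ga)); tauto. Qed.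

Lemma l_top_cl i x : cl ldata ga i x <-> Ctl i x.
Proof. simpl. split. intros [[_ h]|[h _]]; tauto. intro h; left; auto. Qed.

Lemma top_lt P i x : E P -> LE io0 i -> lt i kap -> cl P (gm P) i x -> lt x (gm P).
Proof.
  intros e h1 h2 C. destruct (VALID_parts P (HE P e)) as [V1 [_ [V3 _]]].
  apply (proj1 (V3 (gm P) i V1 (le_refl _) ltac:(rewrite HI; auto) h2)); auto.
Qed.

Lemma coh_top P i x : E P -> LE io0 i -> lt i kap -> lt x (gm P) -> (Ctl i x <-> cl P (gm P) i x).
Proof.
  intros e h1 h2 lx. split; [|intro C; exists P; split; auto].
  intros [P' [e' C]]. destruct (HT P P' e e') as [<-|[[l [X A]]|[l [X A]]]].
  - destruct C as [C|C]; auto. subst; exfalso; exact (lt_irrefl _ lx).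
  - destruct (VALID_parts P' (HE P' e')) as [V1' [_ [_ [_ [V5' _]]]]].
    destruct (VALID_parts P (HE P e)) as [V1 _].
    destruct (V5' (gm P) (gm P') i V1 V1' l (le_refl _) ltac:(rewrite HI; auto) h2 (A i h1 h2)) as [_ E2].
    destruct C as [C|C].
    + destruct (proj2 X (gm P) V1 (le_refl _)) as [X1 X2]. apply X2. rewrite HI; auto. auto.
      apply E2; auto.
    + subst. exfalso. exact (lt_asym _ _ l lx).
  - destruct (VALID_parts P (HE P e)) as [V1 [_ [_ [_ [V5 _]]]]].
    destruct (VALID_parts P' (HE P' e')) as [V1' _].
    destruct (V5 (gm P') (gm P) i V1' V1 l (le_refl _) ltac:(rewrite HI; auto) h2 (A i h1 h2)) as [_ E2].
    destruct C as [C|C].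
    + destruct (proj2 X (gm P') V1' (le_refl _)) as [X1 X2].
      refine (proj1 (proj2 (E2 x) _)). apply (proj2 (X2 i ltac:(rewrite HI; auto) h2 x)). exact C.
    + subst. apply (A i h1 h2).
Qed.

Lemma lim_valid : VALID ldata /\ (forall P, E P -> EXT ldata P) /\ io ldata ga = io0 /\
  (forall P i, E P -> LE io0 i -> lt i kap -> ACC (cl ldata ga i) (gm P)).
Proof.
  destruct Hne as [P0 e0].
  assert (AT : forall P i, E P -> LE io0 i -> lt i kap -> ACC (cl ldata ga i) (gm P)).
  { intros P i e h1 h2. split. apply l_top_cl. exists P; split; auto.
    intros c lc. destruct (VALID_parts P (HE P e)) as [V1 [_ [V3 _]]].
    destruct (V3 (gm P) i V1 (le_refl _) ltac:(rewrite HI; auto) h2) as [c1 [c2 _]].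
    destruct (c2 c lc) as [d [D cd]]. exists d. split; [|split; auto].
    apply l_top_cl. exists P; split; auto. }
  assert (EXl : forall P, E P -> EXT ldata P).
  { intros P e. split. apply lt_le, Hg1; auto. intros a la l.
    assert (n : a <> ga). { intro; subst. exact (le_not_lt _ _ l (Hg1 P e)). }
    split. apply l_io; auto. intros i h1 h2 x. apply l_cl; auto. }
  split; [|split; [exact EXl|split; [exact l_top_io|exact AT]]].
  assert (LG : forall a, LE a ga -> a = ga \/ (a <> ga /\ exists P, E P /\ lt a (gm P))).
  { intros a [l|l]; auto. right. split. apply lt_neq; auto. apply Hg2; auto. }
  split; [|split; [|split; [|split; [|split]]]].
  - split. exists (gm P0); auto. intros b lb. destruct (Hg2 b lb) as [P [e l]]. exists (gm P); auto.
  - intros a la l. destruct (LG a l) as [->|[n [P [e lp]]]].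
    + rewrite l_top_io; auto.
    + rewrite (l_io a P n la e (lt_le _ _ lp)). apply (VALID_parts P (HE P e)); auto. apply lt_le; auto.
  - intros a i la l hi hk. destruct (LG a l) as [->|[n [P [e lp]]]].
    + rewrite l_top_io in hi. eapply club_ext. intro x; symmetry; apply l_top_cl.
      split; [|split].
      * intros x [P [e C]]. destruct C as [C|C]. eapply lt_trans; [eapply top_lt; eauto| apply Hg1; auto].
        subst; apply Hg1; auto.
      * intros b lb. destruct (Hg2 b lb) as [P [e l']]. exists (gm P); split; auto. exists P; auto.
      * intros d ld hex hc. destruct (Hg2 d ld) as [P [e l']].
        destruct (VALID_parts P (HE P e)) as [V1 [_ [V3 _]]].
        apply (coh_top P i d e hi hk l').
        apply (club_closed (gm P) _ d (V3 (gm P) i V1 (le_refl _) ltac:(rewrite HI; auto) hk) l' hex).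
        intros b lb. destruct (hc b lb) as [c [C [? ?]]]. exists c; split; auto.
        apply (coh_top P i c e hi hk); auto. eapply lt_trans; eauto.
    + rewrite (l_io a P n la e (lt_le _ _ lp)) in hi.
      eapply club_ext. intro x; symmetry; apply (l_cl a P i x n la e (lt_le _ _ lp) hi hk).
      apply (VALID_parts P (HE P e)); auto. apply lt_le; auto.
  - intros a i j la l hi ij hk x. destruct (LG a l) as [->|[n [P [e lp]]]].
    + rewrite l_top_io in hi. rewrite !l_top_cl. intros [P [e C]]. exists P; split; auto.
      destruct C as [C|C]; auto. left.
      destruct (VALID_parts P (HE P e)) as [V1 [_ [_ [V4 _]]]].
      exact (V4 (gm P) i j V1 (le_refl _) ltac:(rewrite HI; auto) ij hk x C).
    + rewrite (l_io a P n la e (lt_le _ _ lp)) in hi.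
      assert (hi' : lt i kap) by (eapply lt_trans; eauto).
      rewrite (l_cl a P i x n la e (lt_le _ _ lp) hi hi').
      rewrite (l_cl a P j x n la e (lt_le _ _ lp) (le_trans _ _ _ hi (lt_le _ _ ij)) hk).
      destruct (VALID_parts P (HE P e)) as [V1 [_ [_ [V4 _]]]].
      exact (V4 a i j la (lt_le _ _ lp) hi ij hk x).
  - intros a c i la lc ac l hi hk A. destruct (LG c l) as [->|[n [P [e lp]]]].
    + rewrite l_top_io in hi. destruct (Hg2 a ac) as [P [e lp]].
      destruct (VALID_parts P (HE P e)) as [V1 [_ [_ [_ [V5 _]]]]].
      assert (A' : ACC (cl P (gm P) i) a).
      { eapply acc_restr; [exact lp| |exact A]. intros x lx. rewrite l_top_cl. apply coh_top; auto. }
      destruct (V5 a (gm P) i la V1 lp (le_refl _) ltac:(rewrite HI; auto) hk A') as [E1 E2].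
      assert (na : a <> ga) by (apply lt_neq; auto).
      rewrite (l_io a P na la e (lt_le _ _ lp)). split; auto. intro x.
      rewrite (l_cl a P i x na la e (lt_le _ _ lp) E1 hk), <- E2, l_top_cl.
      split; intros [C lx]; (split; [|exact lx]).
      * apply (proj1 (coh_top P i x e hi hk (lt_trans _ _ _ lx lp))); auto.
      * apply (proj2 (coh_top P i x e hi hk (lt_trans _ _ _ lx lp))); auto.
    + assert (na : a <> ga) by (apply lt_neq; exact (lt_trans _ _ _ ac (lt_trans _ _ _ lp (Hg1 P e)))).
      assert (nc : c <> ga) by exact n.
      rewrite (l_io c P n lc e (lt_le _ _ lp)) in hi.
      destruct (VALID_parts P (HE P e)) as [V1 [_ [_ [_ [V5 _]]]]].
      assert (A' : ACC (cl P c i) a).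
      { eapply acc_mono; [|exact A]. intro x. rewrite (l_cl c P i x n lc e (lt_le _ _ lp) hi hk); auto. }
      assert (lap : LE a (gm P)) by (apply lt_le; eapply lt_trans; eauto).
      destruct (V5 a c i la lc ac (lt_le _ _ lp) hi hk A') as [E1 E2].
      rewrite (l_io a P na la e lap). split; auto. intro x.
      rewrite (l_cl a P i x na la e lap E1 hk), (l_cl c P i x n lc e (lt_le _ _ lp) hi hk). auto.
  - intros a c la lc ac l. destruct (LG c l) as [->|[n [P [e lp]]]].
    + destruct (Hg2 a ac) as [P [e lp]].
      destruct (VALID_parts P (HE P e)) as [V1 [_ [_ [_ [_ V6]]]]].
      destruct (V6 a (gm P) la V1 lp (le_refl _)) as [i [E1 [E2 A]]].
      exists i. rewrite l_top_io. rewrite HI in E1; auto. split; auto. split; auto.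
      eapply acc_mono; [|exact A]. intros x C. apply l_top_cl. exists P; auto.
    + destruct (VALID_parts P (HE P e)) as [V1 [_ [_ [_ [_ V6]]]]].
      destruct (V6 a c la lc ac (lt_le _ _ lp)) as [i [E1 [E2 A]]].
      exists i. rewrite (l_io c P n lc e (lt_le _ _ lp)). split; auto. split; auto.
      eapply acc_mono; [|exact A]. intros x C. apply (l_cl c P i x n lc e (lt_le _ _ lp) E1 E2); auto.
Qed.

End Lim.

Local Notation PC := (Pcond O lt kap).
Local Notation PLE := (Ple O lt kap).
Local Notation EVEN := (is_even O lt).
Local Notation SUCC := (succ_of O lt).

Definition data (c : PC) : option CD :=
  match c with Some p => Some (proj1_sig p) | None => None end.

Lemma data_valid c P : data c = Some P -> VALID P.
Proof. destruct c as [[q h]|]; simpl; intro e; inversion e; subst; auto. Qed.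

Definition mk (q : CD) : PC :=
  match excluded_middle_informative (VALID q) with left h => Some (exist _ q h) | right _ => None end.

Lemma mk_ok q : VALID q -> data (mk q) = Some q.
Proof. intro h. unfold mk. destruct (excluded_middle_informative (VALID q)); simpl; tauto. Qed.

Lemma ple_data c1 c2 Q P : data c1 = Some Q -> data c2 = Some P -> (PLE c1 c2 <-> EXT Q P).
Proof.
  destruct c1 as [[q1 h1]|], c2 as [[q2 h2]|]; simpl; intros e1 e2; inversion e1; inversion e2; subst; tauto.
Qed.

Lemma ple_none_l c1 c2 P : data c1 = None -> data c2 = Some P -> ~ PLE c1 c2.
Proof. destruct c1 as [[q1 h1]|], c2 as [[q2 h2]|]; simpl; intros e1 e2; try discriminate; tauto. Qed.

Lemma ple_none_r c1 c2 : data c2 = None -> PLE c1 c2.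
Proof. destruct c1 as [[q1 h1]|], c2 as [[q2 h2]|]; simpl; intros e2; try discriminate; tauto. Qed.

Lemma ple_refl c : PLE c c.
Proof. destruct c as [[q h]|]; simpl; auto. apply ext_refl. Qed.

Lemma ple_trans r q p : PLE r q -> PLE q p -> PLE r p.
Proof.
  destruct r as [[r hr]|], q as [[q hq]|], p as [[p hp]|]; simpl; auto; try tauto.
  apply ext_trans.
Qed.

Lemma data_some c P : data c = Some P -> exists h, c = Some (exist _ P h).
Proof. destruct c as [[q h]|]; simpl; intro e; inversion e; subst; eauto. Qed.

Lemma data_none c : data c = None -> c = None.
Proof. destruct c; simpl; congruence. Qed.

Definition ev a (f : {x | lt x a} -> PC) (x : O) : PC :=
  match excluded_middle_informative (lt x a) with left h => f (exist _ x h) | right _ => None end.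

Lemma ev_restr a (p : O -> PC) x : lt x a -> ev a (restr O lt kap p a) x = p x.
Proof. intro h. unfold ev. destruct (excluded_middle_informative (lt x a)); [reflexivity|tauto]. Qed.

Definition jspec (P : CD) (be io0 j : O) : Prop :=
  LE io0 j /\ lt j kap /\ LE (io P (gm P)) j /\ (lt be (gm P) -> ACC (cl P (gm P) j) be).

Definition jsel (P : CD) (be io0 : O) : O := epsilon (inhabits io0) (jspec P be io0).

Lemma jsel_spec P be io0 : VALID P -> ISLIM be -> LE be (gm P) -> LE (io P be) io0 -> lt io0 kap ->
  jspec P be io0 (jsel P be io0).
Proof.
  intros HP Hb1 Hb2 Hi1 Hi2. unfold jsel. apply epsilon_spec.
  destruct (VALID_parts P HP) as [V1 [V2 [V3 [V4 [V5 V6]]]]].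
  destruct (le_cases _ _ Hb2) as [l|e].
  - destruct (V6 be (gm P) Hb1 V1 l (le_refl _)) as [i0 [e1 [e2 A]]].
    destruct (le_total i0 io0) as [m|m].
    + exists io0. split; [apply le_refl|]. split; [exact Hi2|]. split; [eapply le_trans; eauto|].
      intros _. eapply acc_mono; [|exact A]. intros x C.
      destruct (le_cases _ _ m) as [m'|m'].
      * exact (V4 (gm P) i0 io0 V1 (le_refl _) e1 m' Hi2 x C).
      * subst; auto.
    + exists i0. split; [exact m|]. split; [exact e2|]. split; [exact e1|]. intros _; exact A.
  - exists io0. split. apply le_refl. split; auto. split. rewrite <- e; auto.
    intro l; exfalso; rewrite e in l; exact (lt_irrefl _ l).
Qed.

Definition smove (I II : PC) : PC :=
  match data I with
  | None => None
  | Some P =>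
    match data II with
    | None => mk (sdata P (gm P) (io P (gm P)) (jsel P (gm P) (io P (gm P))))
    | Some P2 => mk (sdata P (gm P2) (io P2 (gm P2)) (jsel P (gm P2) (io P2 (gm P2))))
    end
  end.

Definition Elim a (g : O -> PC) (P : CD) : Prop := exists y, lt y a /\ EVEN y /\ data (g y) = Some P.

Definition lmove a (g : O -> PC) : PC :=
  let E := Elim a g in
  mk (ldata E (epsilon (inhabits a) (fun j => exists P, E P /\ io P (gm P) = j))
              (epsilon (inhabits a) (fun u => (forall P, E P -> lt (gm P) u) /\
                                              forall c, lt c u -> exists P, E P /\ lt c (gm P)))).

Definition strat : strategy O lt kap := fun a f =>
  let g := ev a f in
  match excluded_middle_informative (exists yb : O * O, SUCC (fst yb) (snd yb) /\ SUCC (snd yb) a) with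
  | left h => let yb := proj1_sig (constructive_indefinite_description _ h) in smove (g (snd yb)) (g (fst yb))
  | right _ =>
    match excluded_middle_informative (exists P, Elim a g P) with
    | left _ => lmove a g
    | right _ => None
    end
  end.


Lemma pred_unique b b' a : SUCC b a -> SUCC b' a -> b = b'.
Proof.
  intros [l1 h1] [l2 h2]. apply le_antisym; [apply h2|apply h1]; auto.
Qed.

Lemma succ_exists x a : lt x a -> exists c, SUCC x c /\ LE c a.
Proof.
  intro h. destruct (wf_least (fun c => lt x c /\ LE c a)) as [c [[c1 c2] c3]].
  { exists a; split; auto. apply le_refl. }
  exists c. split; auto. split; auto. intros w lw. apply not_lt_le. intro xw.
  apply (c3 w); auto. split; auto. apply lt_le; eapply lt_le_trans; eauto.
Qed.

Lemma even_or_odd x : EVEN x \/ exists b, EVEN b /\ SUCC b x.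
Proof.
  destruct WO as [W _]. induction (W x) as [x _ IH].
  destruct (classic (forall b, lt b x -> exists c, lt b c /\ lt c x)) as [L|L].
  - left; constructor; auto.
  - apply not_all_ex_not in L. destruct L as [b L].
    assert (lb : lt b x) by (apply NNPP; intro; apply L; intro; tauto).
    assert (S : SUCC b x).
    { split; auto. intros w lw. apply not_lt_le. intro bw. apply L; intros _; eauto. }
    destruct (IH b lb) as [Eb|[d [Ed Sd]]].
    + right; eauto.
    + left. eapply ev_ss; eauto.
Qed.

Lemma even_succ_not x : EVEN x -> forall z, SUCC x z -> ~ EVEN z.
Proof.
  intro H. induction H as [x L|a0 b0 x Ea0 IH S0 S1]; intros z Sz Ez.
  - inversion Ez as [z' Lz|a1 b1 z' Ea1 Sa1 Sb1]; subst.
    + destruct (Lz x (proj1 Sz)) as [c [c1 c2]]. exact (le_not_lt _ _ (proj2 Sz c c2) c1).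
    + assert (b1 = x) by (eapply pred_unique; eauto). subst.
      destruct (L a1 (proj1 Sa1)) as [c [c1 c2]]. exact (le_not_lt _ _ (proj2 Sa1 c c2) c1).
  - inversion Ez as [z' Lz|a1 b1 z' Ea1 Sa1 Sb1]; subst.
    + destruct (Lz x (proj1 Sz)) as [c [c1 c2]]. exact (le_not_lt _ _ (proj2 Sz c c2) c1).
    + assert (b1 = x) by (eapply pred_unique; eauto). subst.
      assert (b0 = a1) by (eapply pred_unique; eauto). subst.
      exact (IH a1 S0 Ea1).
Qed.

Lemma even_pp y b a : EVEN a -> SUCC y b -> SUCC b a -> EVEN y.
Proof.
  intros Ea Sy Sb. inversion Ea as [a' La|a1 b1 a' Ea1 Sa1 Sb1]; subst.
  - destruct (La b (proj1 Sb)) as [c [c1 c2]]. exfalso. exact (le_not_lt _ _ (proj2 Sb c c2) c1).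
  - assert (b1 = b) by (eapply pred_unique; eauto). subst.
    assert (a1 = y) by (eapply pred_unique; eauto). subst. auto.
Qed.

Lemma even_lim a : EVEN a -> ~ (exists yb : O * O, SUCC (fst yb) (snd yb) /\ SUCC (snd yb) a) ->
  forall b, lt b a -> exists c, lt b c /\ lt c a.
Proof.
  intros Ea N. inversion Ea as [a' La|a1 b1 a' Ea1 Sa1 Sb1]; subst; auto.
  exfalso; apply N. exists (a1, b1); simpl; auto.
Qed.

Lemma succ_in_lim x a : (forall b, lt b a -> exists c, lt b c /\ lt c a) -> lt x a ->
  exists c, SUCC x c /\ lt c a.
Proof.
  intros L h. destruct (succ_exists x a h) as [c [S l]]. exists c; split; auto.
  destruct (le_cases _ _ l) as [l'|e]; auto. subst.
  destruct (L x h) as [d [d1 d2]]. exfalso. exact (le_not_lt _ _ (proj2 S d d2) d1).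
Qed.

Lemma even_above x a : (forall b, lt b a -> exists c, lt b c /\ lt c a) -> lt x a ->
  exists z, EVEN z /\ LE x z /\ lt z a.
Proof.
  intros L h. destruct (even_or_odd x) as [E|[b [Eb Sb]]].
  - exists x; split; auto. split; auto. apply le_refl.
  - destruct (succ_in_lim x a L h) as [c [Sc lc]]. exists c. split. eapply ev_ss; eauto.
    split; auto. apply lt_le, Sc.
Qed.

Lemma even_next y a : (forall b, lt b a -> exists c, lt b c /\ lt c a) -> lt y a -> EVEN y ->
  exists z, EVEN z /\ lt y z /\ lt z a.
Proof.
  intros L h Ey. destruct (succ_in_lim y a L h) as [c [Sc lc]].
  destruct (succ_in_lim c a L lc) as [d [Sd ld]]. exists d. split. eapply ev_ss; eauto.
  split; auto. eapply lt_trans; [apply Sc| apply Sd].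
Qed.

Lemma play_mono a a' p : play_upto O lt kap strat a p -> LE a' a -> play_upto O lt kap strat a' p.
Proof.
  intros [h1 h2] l. split.
  - intros x y xy ya. apply h1; auto. eapply lt_le_trans; eauto.
  - intros x xa. apply h2. eapply lt_le_trans; eauto.
Qed.


Definition goodmove a (p : O -> PC) (q : PC) : Prop :=
  (forall x, lt x a -> PLE q (p x)) /\ ((forall x, ~ lt x a) -> q = None) /\
  (forall x, lt x a -> EVEN x -> forall P, data (p x) = Some P ->
     exists Q, data q = Some Q /\ lt (gm P) (gm Q) /\ io Q (gm Q) = io P (gm P) /\
       forall i, LE (io P (gm P)) i -> lt i kap -> ACC (cl Q (gm Q) i) (gm P)).

Lemma strat_cases a f :
  (exists y b, SUCC y b /\ SUCC b a /\ strat a f = smove (ev a f b) (ev a f y)) \/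
  (~ (exists yb : O * O, SUCC (fst yb) (snd yb) /\ SUCC (snd yb) a) /\
     (exists P, Elim a (ev a f) P) /\ strat a f = lmove a (ev a f)) \/
  (~ (exists yb : O * O, SUCC (fst yb) (snd yb) /\ SUCC (snd yb) a) /\
     ~ (exists P, Elim a (ev a f) P) /\ strat a f = None).
Proof.
  unfold strat. destruct (excluded_middle_informative _) as [h|h].
  - left. destruct (constructive_indefinite_description _ h) as [[y b] [S1 S2]]. simpl. eauto.
  - right. destruct (excluded_middle_informative _) as [h'|h']; [left|right]; auto.
Qed.

Lemma ElimE a p P : Elim a (ev a (restr O lt kap p a)) P <-> exists y, lt y a /\ EVEN y /\ data (p y) = Some P.
Proof.
  split; intros [y [l [e d]]]; exists y; split; auto; split; auto; rewrite ev_restr in *; auto.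
Qed.

Section MainStep.
Context (a : O) (Ea : EVEN a) (p : O -> PC) (Hp : play_upto O lt kap strat a p).
Context (IHp : forall y, lt y a -> EVEN y -> goodmove y p (p y)).

Let Hpl : forall x y, lt x y -> lt y a -> PLE (p y) (p x) := proj1 Hp.

Lemma main_succ y b : SUCC y b -> SUCC b a -> goodmove a p (smove (p b) (p y)).
Proof.
  intros S1 S2.
  assert (lb : lt b a) by apply S2. assert (ly : lt y a) by (eapply lt_trans; [apply S1|exact lb]).
  assert (Ey : EVEN y) by (eapply even_pp; eauto).
  assert (Nb : ~ EVEN b) by (apply (even_succ_not y Ey b S1)).
  assert (XB : forall x, lt x a -> x = b \/ lt x b).
  { intros x lx. destruct (le_cases _ _ (proj2 S2 x lx)); auto. }
  assert (XY : forall x, lt x b -> x = y \/ lt x y).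
  { intros x lx. destruct (le_cases _ _ (proj2 S1 x lx)); auto. }
  assert (PB : forall x, lt x a -> PLE (p b) (p x)).
  { intros x lx. destruct (XB x lx) as [->|l]. apply ple_refl. apply Hpl; auto. }
  unfold smove. destruct (data (p b)) as [PI|] eqn:EI.
  2:{ split; [|split].
      - intros x lx. destruct (data (p x)) as [Px|] eqn:EX. exfalso. exact (ple_none_l _ _ _ EI EX (PB x lx)).
        apply ple_none_r; auto.
      - intro H; exfalso; exact (H b lb).
      - intros x lx _ P EX. exfalso. exact (ple_none_l _ _ _ EI EX (PB x lx)). }
  assert (VPI : VALID PI) by (eapply data_valid; eauto).
  destruct (VALID_parts PI VPI) as [W1 [W2 _]].
  assert (GEN : forall be io0, ISLIM be -> LE be (gm PI) -> LE (io PI be) io0 -> lt io0 kap ->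
     goodmove a p (mk (sdata PI be io0 (jsel PI be io0))) \/ True).
  { auto. }
  clear GEN.
  assert (AQ : forall be io0, ISLIM be -> LE be (gm PI) -> LE (io PI be) io0 -> lt io0 kap ->
     let Q := sdata PI be io0 (jsel PI be io0) in
     data (mk Q) = Some Q /\ VALID Q /\ EXT Q PI /\ lt (gm PI) (gm Q) /\ io Q (gm Q) = io0 /\
     (forall i, LE io0 i -> lt i kap -> ACC (cl Q (gm Q) i) be) /\
     (forall x, lt x a -> PLE (mk Q) (p x))).
  { intros be io0 h1 h2 h3 h4 Q.
    destruct (jsel_spec PI be io0 VPI h1 h2 h3 h4) as [J1 [J2 [J3 J4]]].
    destruct (succ_valid PI be io0 (jsel PI be io0) VPI h1 h2 h3 h4 J1 J2 J3 J4) as [VQ [EQ [LQ [IQ AQ]]]].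
    assert (DQ : data (mk Q) = Some Q) by (apply mk_ok; auto).
    split; auto. split; auto. split; auto. split; auto. split; auto. split; auto.
    intros x lx. eapply ple_trans; [|exact (PB x lx)]. apply (ple_data _ _ _ _ DQ EI). auto. }
  destruct (data (p y)) as [P2|] eqn:E2.
  - assert (VP2 : VALID P2) by (eapply data_valid; eauto).
    destruct (VALID_parts P2 VP2) as [U1 [U2 [U3 [U4 [U5 U6]]]]].
    assert (EP : EXT PI P2) by (apply (ple_data _ _ _ _ EI E2); apply Hpl; auto; apply S1).
    destruct (proj2 EP (gm P2) U1 (le_refl _)) as [EP1 EP2].
    destruct (AQ (gm P2) (io P2 (gm P2)) U1 (proj1 EP) ltac:(rewrite EP1; apply le_refl) (U2 _ U1 (le_refl _)))
      as [DQ [VQ [EQ [LQ [IQ [AQ' PQ]]]]]].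
    set (Q := sdata PI (gm P2) (io P2 (gm P2)) (jsel PI (gm P2) (io P2 (gm P2)))) in *.
    split; [exact PQ|split].
    + intro H; exfalso; exact (H b lb).
    + intros x lx Ex P EX. destruct (XB x lx) as [->|l]; [tauto|].
      exists Q. split; auto.
      destruct (XY x l) as [->|l'].
      * rewrite E2 in EX. inversion EX; subst P. split; [|split; auto].
        eapply le_lt_trans; [apply EP| exact LQ].
      * destruct (proj2 (proj2 (IHp y ly Ey)) x l' Ex P EX) as [Q' [DQ' [F1 [F2 F3]]]].
        rewrite E2 in DQ'. inversion DQ'; subst Q'.
        split. eapply lt_trans; [exact F1|]. eapply le_lt_trans; [apply EP| exact LQ].
        split. rewrite IQ; auto.
        intros i hi hk. rewrite <- F2 in hi.
        destruct (VALID_parts Q VQ) as [Q1 [_ [_ [_ [Q5 _]]]]].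
        destruct (Q5 (gm P2) (gm Q) i U1 Q1 (le_lt_trans _ _ _ (proj1 EP) LQ) (le_refl _)
                    ltac:(rewrite IQ; auto) hk (AQ' i hi hk)) as [_ G].
        pose proof (ext_trans _ _ _ EQ EP) as EQ2.
        destruct (proj2 EQ2 (gm P2) U1 (le_refl _)) as [H1 H2].
        eapply acc_restr; [exact F1| |exact (F3 i ltac:(rewrite <- F2; exact hi) hk)].
        intros z lz. rewrite <- (H2 i hi hk z). rewrite <- G. tauto.
  - destruct (AQ (gm PI) (io PI (gm PI)) W1 (le_refl _) (le_refl _) (W2 _ W1 (le_refl _)))
      as [DQ [VQ [EQ [LQ [IQ [AQ' PQ]]]]]].
    split; [exact PQ|split].
    + intro H; exfalso; exact (H b lb).
    + intros x lx Ex P EX. destruct (XB x lx) as [->|l]; [tauto|].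
      exfalso. destruct (XY x l) as [->|l']. congruence.
      exact (ple_none_l _ _ _ E2 EX (Hpl x y l' ly)).
Qed.


Lemma main_lim : (forall b, lt b a -> exists c, lt b c /\ lt c a) ->
  (exists P, Elim a (ev a (restr O lt kap p a)) P) ->
  goodmove a p (lmove a (ev a (restr O lt kap p a))).
Proof.
  intros L Hne. set (g := ev a (restr O lt kap p a)) in *.
  set (E := Elim a g).
  assert (EE : forall P, E P <-> exists y, lt y a /\ EVEN y /\ data (p y) = Some P) by (intro; apply ElimE).
  assert (HE : forall P, E P -> VALID P).
  { intros P e. apply EE in e. destruct e as [y [_ [_ d]]]. eapply data_valid; eauto. }
  assert (PW : forall P P', E P -> E P' -> P = P' \/
     (lt (gm P) (gm P') /\ EXT P' P /\ io P' (gm P') = io P (gm P) /\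
      forall i, LE (io P (gm P)) i -> lt i kap -> ACC (cl P' (gm P') i) (gm P)) \/
     (lt (gm P') (gm P) /\ EXT P P' /\ io P (gm P) = io P' (gm P') /\
      forall i, LE (io P' (gm P')) i -> lt i kap -> ACC (cl P (gm P) i) (gm P'))).
  { intros P P' e e'. apply EE in e, e'. destruct e as [y1 [l1 [E1 d1]]], e' as [y2 [l2 [E2 d2]]].
    destruct (lt_total y1 y2) as [l|[l|l]].
    - right; left.
      destruct (proj2 (proj2 (IHp y2 l2 E2)) y1 l E1 P d1) as [Q [DQ [F1 [F2 F3]]]].
      rewrite d2 in DQ. inversion DQ; subst Q. split; auto. split; auto.
      apply (ple_data _ _ _ _ d2 d1). apply Hpl; auto.
    - left. subst. rewrite d1 in d2. inversion d2; auto.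
    - right; right.
      destruct (proj2 (proj2 (IHp y1 l1 E1)) y2 l E2 P' d2) as [Q [DQ [F1 [F2 F3]]]].
      rewrite d1 in DQ. inversion DQ; subst Q. split; auto. split; auto.
      apply (ple_data _ _ _ _ d1 d2). apply Hpl; auto. }
  set (io0 := epsilon (inhabits a) (fun j => exists P, E P /\ io P (gm P) = j)).
  assert (Hio : exists P, E P /\ io P (gm P) = io0).
  { unfold io0. apply epsilon_spec. destruct Hne as [P e]. eauto. }
  destruct Hio as [P1 [e1 i1]].
  assert (HI : forall P, E P -> io P (gm P) = io0).
  { intros P e. rewrite <- i1. destruct (PW P P1 e e1) as [->|[[_ [_ [h _]]]|[_ [_ [h _]]]]]; auto. }
  assert (Hk : lt io0 kap).
  { rewrite <- i1. destruct (VALID_parts P1 (HE P1 e1)) as [V1 [V2 _]]. apply V2; auto. apply le_refl. }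
  assert (HT : forall P P', E P -> E P' -> P = P' \/ RR io0 P P' \/ RR io0 P' P).
  { intros P P' e e'. destruct (PW P P' e e') as [h|[[h1 [h2 [_ h3]]]|[h1 [h2 [_ h3]]]]]; auto.
    - right; left. split; auto. split; auto. rewrite <- (HI P e). auto.
    - right; right. split; auto. split; auto. rewrite <- (HI P' e'). auto. }
  assert (T3 : forall P, E P -> exists P', E P' /\ lt (gm P) (gm P')).
  { intros P e. pose proof e as e0. apply EE in e0. destruct e0 as [y [ly [Ey dy]]].
    destruct (even_next y a L ly Ey) as [z [Ez [yz za]]].
    destruct (proj2 (proj2 (IHp z za Ez)) y yz Ey P dy) as [Q [DQ [F1 _]]].
    exists Q. split; auto. apply EE. eauto. }
  set (ga := epsilon (inhabits a) (fun u => (forall P, E P -> lt (gm P) u) /\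
                                              forall c, lt c u -> exists P, E P /\ lt c (gm P))).
  assert (Hga : (forall P, E P -> lt (gm P) ga) /\ forall c, lt c ga -> exists P, E P /\ lt c (gm P)).
  { unfold ga. apply epsilon_spec.
    destruct (bounded_gen {x | lt x a} a (fun x => x) (fun u => exists P, E P /\ u = gm P)
       (fun y u => exists P, data (g (proj1_sig y)) = Some P /\ u = gm P)) as [u0 hu0].
    - intros u v e; auto.
    - intros u [P [e ->]]. destruct e as [y [ly [_ dy]]]. exists (exist _ y ly). eauto.
    - intros y u v [P [d ->]] [P' [d' ->]]. rewrite d in d'. inversion d'; auto.
    - destruct (wf_least (fun u => forall P, E P -> lt (gm P) u)) as [u [h1 h2]].
      { exists u0. intros P e. apply hu0; eauto. }
      exists u. split; auto. intros c lc. apply NNPP; intro N. apply (h2 c); auto.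
      intros P e. apply NNPP; intro M. apply not_lt_le in M.
      destruct (T3 P e) as [P' [e' l']]. apply N. exists P'. split; auto. eapply le_lt_trans; eauto. }
  destruct Hga as [Hg1 Hg2].
  destruct (lim_valid E io0 ga HE HI Hk HT Hne Hg1 Hg2) as [VQ [EXl [IQ AT]]].
  unfold lmove. fold E. fold io0. fold ga.
  assert (DQ : data (mk (ldata E io0 ga)) = Some (ldata E io0 ga)) by (apply mk_ok; auto).
  split; [|split].
  - intros x lx. destruct (data (p x)) as [Px|] eqn:EX; [|apply ple_none_r; auto].
    destruct (even_above x a L lx) as [z [Ez [xz za]]].
    assert (PZ : PLE (p z) (p x)) by (destruct (le_cases _ _ xz) as [l|l]; [apply Hpl; auto| subst; apply ple_refl]).
    destruct (data (p z)) as [Pz|] eqn:EZ; [|exfalso; exact (ple_none_l _ _ _ EZ EX PZ)].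
    eapply ple_trans; [|exact PZ]. apply (ple_data _ _ _ _ DQ EZ). apply EXl. apply EE; eauto.
  - intro H. exfalso. destruct Hne as [P [y [ly _]]]. exact (H y ly).
  - intros x lx Ex P EX. assert (e : E P) by (apply EE; eauto).
    exists (ldata E io0 ga). split; auto. split. apply Hg1; auto.
    split. change (io (ldata E io0 ga) ga = io P (gm P)). rewrite IQ, HI; auto.
    intros i hi hk. rewrite (HI P e) in hi. apply AT; auto.
Qed.

Lemma main_none : (forall b, lt b a -> exists c, lt b c /\ lt c a) \/ (forall x, ~ lt x a) ->
  ~ (exists P, Elim a (ev a (restr O lt kap p a)) P) -> goodmove a p None.
Proof.
  intros L N. assert (K : forall x, lt x a -> data (p x) = None).
  { intros x lx. destruct (data (p x)) as [Px|] eqn:EX; auto. exfalso.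
    destruct L as [L|L]; [|exact (L x lx)].
    destruct (even_above x a L lx) as [z [Ez [xz za]]].
    assert (PZ : PLE (p z) (p x)) by (destruct (le_cases _ _ xz) as [l|l]; [apply Hpl; auto| subst; apply ple_refl]).
    destruct (data (p z)) as [Pz|] eqn:EZ; [|exact (ple_none_l _ _ _ EZ EX PZ)].
    apply N. exists Pz. apply ElimE. eauto. }
  split; [|split].
  - intros x lx. apply ple_none_r; auto.
  - auto.
  - intros x lx _ P EX. rewrite K in EX; auto. discriminate.
Qed.

End MainStep.

Lemma main a : EVEN a -> forall p, play_upto O lt kap strat a p -> goodmove a p (strat a (restr O lt kap p a)).
Proof.
  destruct WO as [W _]. induction (W a) as [a _ IH]. intros Ea p Hp.
  assert (IHp : forall y, lt y a -> EVEN y -> goodmove y p (p y)).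
  { intros y ly Ey. rewrite (proj2 Hp y ly Ey). apply IH; auto. apply (play_mono a y p Hp). apply lt_le; auto. }
  destruct (strat_cases a (restr O lt kap p a)) as [[y [b [S1 [S2 ->]]]]|[[N [Hne ->]]|[N [Hn ->]]]].
  - assert (lb : lt b a) by apply S2. assert (ly : lt y a) by (eapply lt_trans; [apply S1|exact lb]).
    rewrite !ev_restr; auto. apply (main_succ a Ea p Hp IHp y b S1 S2).
  - apply (main_lim a p Hp IHp (even_lim a Ea N) Hne).
  - apply (main_none a p Hp); auto.
    destruct (classic (exists x, lt x a)) as [[x lx]|M].
    + left. apply (even_lim a Ea N).
    + right. intros x lx; apply M; eauto.
Qed.

Lemma strat_winning : winning O lt kap strat.
Proof.
  intros a Ea p Hp. destruct (main a Ea p Hp) as [A [B _]]. split; auto.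
Qed.

End Main.

Theorem mainTheorem19 (O : Type) (lt : O -> O -> Prop) (kap : O) :
  is_wellorder O lt ->
  lambda_infinite_regular_cardinal O lt ->
  kappa_infinite_regular_cardinal O lt kap ->
  strategically_closed O lt kap.
Proof.
  intros WO LR KR. exists (strat O lt kap). apply strat_winning; auto.
Qed.
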